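(* Let $A,B\in\mathscr{Q}$ be disjoint option sets and let $K$ be a coherent set of desirable option sets. Then $(A\cup B)-u\in K$ for all $u\in A$ if and only if $B-u\in K$ for all $u\in A$.
   Context: Let $\mathcal{X}$ be a nonempty set and let $\mathscr{V}$ be the real vector space of all functions $u:\mathcal{X}\to\mathbb{R}$ (options), with pointwise operations. For $u,v\in\mathscr{V}$, $u\le v$ iff $u(x)\le v(x)$ for all $x\in\mathcal{X}$, and $u<v$ iff $u\le v$ and $u\neq v$. Let $\mathscr{V}_{>0}=\{u\in\mathscr{V}:0<u\}$ and $\mathscr{V}^s_{>0}=\{\{u\}:u\in\mathscr{V}_{>0}\}$. Let $\mathscr{Q}$ be the set of all finite subsets of $\mathscr{V}$ (including $\emptyset$). For $A\in\mathscr{Q}$ and $u\in\mathscr{V}$, $A-u=\{v-u:v\in A\}$. For a positive integer $n$, $\mathbb{R}^{n,+}=\{\boldsymbol\lambda\in\mathbb{R}^n:\lambda_j\ge0\ \forall j,\ \sum_j\lambda_j>0\}$, and for $\boldsymbol\lambda\in\mathbb{R}^n$, $\mathbf u=(u_1,\dots,u_n)\in\mathscr{V}^n$, $\boldsymbol\lambda\mathbf u=\sum_{j=1}^n\lambda_ju_j$. A set of desirable option sets is any $K\subseteq\mathscr{Q}$. It is coherent if for all $A,B\in K$: (K0) $A\setminus\{0\}\in K$; (K1) $\{0\}\notin K$; (K2) $\mathscr{V}^s_{>0}\subseteq K$; (K3) $\{\boldsymbol\lambda(\mathbf u)\mathbf u:\mathbf u\in A\times B\}\in K$ for every map $\boldsymbol\lambda:A\times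 B\to\mathbb{R}^{2,+}$; (K4) $A\cup Q\in K$ for all $Q\in\mathscr{Q}$. *)

(* Defs.v *)
From HB Require Import structures.
From mathcomp Require Import all_boot all_order all_algebra.
From mathcomp Require Import all_classical all_reals.
Set Implicit Arguments. Unset Strict Implicit. Unset Printing Implicit Defensive.
Import Order.TTheory GRing.Theory Num.Theory.
Local Open Scope classical_set_scope.
Local Open Scope ring_scope.

Definition opt (R : realType) (X : Type) := X -> R.

Definition opt0 (R : realType) (X : Type) : opt R X := fun _ => 0.

Definition ole (R : realType) (X : Type) (u v : opt R X) : Prop :=
  forall x, u x <= v x.
Definition olt (R : realType) (X : Type) (u v : opt R X) : Prop :=
  ole u v /\ u <> v.

Definition shift (R : realType) (X : Type) (A : set (opt R X)) (u : opt R X)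
  : set (opt R X) := [set (fun x => v x - u x) | v in A].

Definition pos2 (R : realType) (l : R * R) : Prop :=
  0 <= l.1 /\ 0 <= l.2 /\ 0 < l.1 + l.2.

(* Coherence of a set of desirable option sets K (K is assumed to consist
   of finite option sets, i.e. K is a subset of Q). *)
Definition coherent (R : realType) (X : Type) (K : set (set (opt R X))) : Prop :=
  (* K0 *) (forall A, K A -> K (A `\ @opt0 R X)) /\
  (* K1 *) ~ K ([set @opt0 R X]) /\
  (* K2 *) (forall u : opt R X, olt (@opt0 R X) u -> K [set u]) /\
  (* K3 *) (forall A B, K A -> K B ->
              forall lam : opt R X * opt R X -> R * R,
              (forall u, A u.1 -> B u.2 -> pos2 (lam u)) ->
              K [set (fun x => (lam u).1 * u.1 x + (lam u).2 * u.2 x)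
                | u in A `*` B]) /\
  (* K4 *) (forall A, K A -> forall Q : set (opt R X), finite_set Q -> K (A `|` Q)).

(* Main.v *)
Require Import Defs.
From HB Require Import structures.
From mathcomp Require Import all_boot all_order all_algebra finmap.
From mathcomp Require Import all_classical all_reals.
Import Order.TTheory GRing.Theory Num.Theory.
Local Open Scope classical_set_scope.
Local Open Scope ring_scope.

Lemma optsub_eq0 (R : realType) (X : Type) (a u : opt R X) :
  (fun x => a x - u x) = @opt0 R X -> a = u.
Proof.
move=> h; apply/funext => x; have := congr1 (fun f => f x) h.
by rewrite /opt0 /= => /eqP; rewrite subr_eq0 => /eqP.
Qed.

Section S.
Variables (R : realType) (X : Type) (K : set (set (opt R X))).
Hypothesis HK : coherent K.
Variables (A B : set (opt R X)).
Hypothesis hA : finite_set A.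
Hypothesis hB : finite_set B.

Definition D (C : set (opt R X)) (w : opt R X) := (A `|` B) `\` C `\` [set w].
Definition P (C : set (opt R X)) := forall w, A w -> K (shift (D C w) w).

Lemma base : (forall u, A u -> K (shift (A `|` B) u)) -> P set0.
Proof.
move=> H w Aw; have := (HK.1 _ (H w Aw)).
congr K; apply/seteqP; split => y /=.
- move=> [[a ABa <-]] ne; exists a => //; split; first by split.
  by move=> /= aw; apply: ne; rewrite aw; apply/funext => x; rewrite /opt0 subrr.
- move=> [a [[ABa _] naw] <-]; split; first by exists a.
  by move=> /optsub_eq0.
Qed.

Lemma step C v : A v -> P C -> P (C `|` [set v]).
Proof.
move=> Av HC u Au.
have [->|nuv] := pselect (u = v).
  have := HC v Av; congr K; congr shift; rewrite /D.
  apply/seteqP; split => y /=.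
  - by move=> [[ABy nC] nv]; split => //; split => // -[].
  - by move=> [[ABy nC] nv]; split => //; split => // Cy; apply: nC; left.
have [_ [_ [_ [K3 K4]]]] := HK.
pose T := shift (D (C `|` [set v]) u) u.
pose Q := T `|` [set @opt0 R X].
pose lam := fun p : opt R X * opt R X =>
  if pselect (p.1 = (fun x => v x - u x)) then ((1:R), (1:R)) else ((1:R), (0:R)).
have hlam : forall p, shift (D C u) u p.1 -> shift (D C v) v p.2 -> pos2 (lam p).
  move=> p _ _; rewrite /lam /pos2; case: pselect => _ /=; split => //;
  split => //; rewrite ?addr0 //; exact: addr_gt0.
have K3' := K3 _ _ (HC u Au) (HC v Av) lam hlam.
have finQ : finite_set Q.
  rewrite finite_setU; split; last exact: finite_set1.
  apply: finite_image; apply: (@sub_finite_set _ _ (A `|` B)).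
    by move=> y [[]].
  by rewrite finite_setU; split.
have K4' := K4 _ K3' Q finQ.
have HQ : K Q.
  move: K4'; congr K; apply/seteqP; split => y; last by right.
  case => // -[[p1 p2] [[a [[ABa nCa] nau] ea] [b [[ABb nCb] nbv] eb]] <-]; rewrite /= in ea eb; subst p1 p2.
  rewrite /lam; case: pselect => /= [e|ne].
  - have -> : (fun x => 1 * (a x - u x) + 1 * (b x - v x)) = (fun x => b x - u x).
      apply/funext => x; have ex := congr1 (fun f => f x) e; rewrite /= in ex; rewrite ex.
      by rewrite !mul1r addrC addrA subrK.
    have [->|nbu] := pselect (b = u).
      by right; apply/funext => x; rewrite /opt0 subrr.
    left; exists b => //; split => //; split => // -[] //.
  - have -> : (fun x => 1 * (a x - u x) + 0 * (b x - v x)) = (fun x => a x - u x).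
      by apply/funext => x; rewrite mul1r mul0r addr0.
    left; exists a => //; split => //; split => // -[] // av; apply: ne.
    by rewrite av.
have := HK.1 _ HQ; congr K; apply/seteqP; split => y.
- by move=> [[//|->]] /=.
- move=> Ty; split; first by left.
  move: Ty => [a [_ nau] <-] /= /optsub_eq0; exact: nau.
Qed.

Lemma listP (s : seq (opt R X)) : (forall u, A u -> K (shift (A `|` B) u)) ->
  (forall v, v \in s -> A v) -> P [set x | x \in s].
Proof.
move=> H; elim: s => [|v s IH] hs.
  have -> : [set x | x \in [::]] = @set0 (opt R X).
    by apply/seteqP; split => y //=.
  exact: base.
have -> : [set x | x \in v :: s] = [set x | x \in s] `|` [set v].
  apply/seteqP; split => y /=; rewrite inE.
    by case/orP => [/eqP ->|ys]; [right|left].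
  by case => [->|->]; rewrite ?eqxx ?orbT.
apply: step; first by apply: hs; rewrite inE eqxx.
by apply: IH => w ws; apply: hs; rewrite inE ws orbT.
Qed.
End S.

Theorem mainTheorem15 (R : realType) (X : Type) (x0 : X)
  (K : set (set (opt R X)))
  (HKQ : forall A, K A -> finite_set A)
  (HK : coherent K)
  (A B : set (opt R X))
  (hA : finite_set A) (hB : finite_set B)
  (hAB : A `&` B = set0) :
  (forall u, A u -> K (shift (A `|` B) u)) <->
  (forall u, A u -> K (shift B u)).
Proof.
split.
- move=> H u Au.
  have [S HS] := finite_fsetP.1 hA.
  have := @listP R X K HK A B hA hB S H.
  move=> /(_ _) HP.
  have {HP} := HP (fun v vS => ltac:(rewrite HS; exact: vS)) u Au.
  congr K; congr shift; rewrite /D; apply/seteqP; split => y /=.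
  - by move=> [[[Ay|By] nS] _] //; exfalso; apply: nS; rewrite HS in Ay.
  - move=> By; split; [split; [by right|] | ].
      move=> yS; have Ay : A y by rewrite HS.
      by have : (A `&` B) y by []; rewrite hAB.
    move=> yu; subst y; by have : (A `&` B) u by []; rewrite hAB.
- move=> H u Au.
  have [_ [_ [_ [_ K4]]]] := HK.
  have := K4 _ (H u Au) (shift A u) (finite_image _ hA).
  by congr K; rewrite /shift image_setU setUC.
Qed.
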